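(* Let $q'>0$, $e'\in(0,1)$, $q_{\max}>0$, $\mathcal D_1=\{(e,\omega'):0\le e\le1,\ 0\le\omega'\le\pi\}$, $\mathcal D_2=\{(q,\omega):0<q\le q_{\max},\ 0\le\omega\le\pi/2\}$. Then: (i) for each $(q,\omega)\in\mathcal D_2$ and $(e,\omega')\in\mathcal D_1$, $$\delta_{\rm int}(q,e,\omega,\omega')\ge\delta_{\rm int}(q,1,\omega,\pi)=q'-\frac{2q}{1-\cos\omega},\qquad \delta_{\rm ext}(q,e,\omega,\omega')\ge\delta_{\rm ext}(q,0,\omega,\pi)=q-Q';$$ consequently, for given $(q,\omega)\in\mathcal D_2$, the configuration has internal nodes for every $(e,\omega')\in\mathcal D_1$ iff $q'-\frac{2q}{1-\cos\omega}>0$, and external nodes for every $(e,\omega')\in\mathcal D_1$ iff $q-Q'>0$; (ii) if $(q,\omega)\in\mathcal D_2$ satisfies $q'-\frac{2q}{1-\cos\omega}\le0$ and $q-Q'\le0$, then there exists $(e,\omega')\in\mathcal D_1$ with $d^+d^-=0$.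
   Context: For $q>0$, $e\in[0,1]$ and angles $\omega,\omega'$, define $r_{\pm}=\frac{q(1+e)}{1\pm e\cos\omega}$, $r'_{\pm}=\frac{q'(1+e')}{1\pm e'\cos\omega'}$ (extended-real values allowed), $d^+=r'_+-r_+$, $d^-=r'_--r_-$, $\delta_{\rm int}=\min\{d^+,d^-\}$, $\delta_{\rm ext}=\min\{-d^+,-d^-\}$, $Q'=\frac{q'(1+e')}{1-e'}$. Internal nodes means $d^+>0$ and $d^->0$; external nodes means $d^+<0$ and $d^-<0$. *)

(* Defs.v *)
From Stdlib Require Import Reals Lra.
Open Scope R_scope.

Inductive ER : Type := Fin (x : R) | PInf | NInf.

Definition ER_le (x y : ER) : Prop :=
  match x, y with
  | NInf, _ => True
  | _, PInf => True
  | Fin a, Fin b => a <= b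
  | _, _ => False
  end.

Definition ER_lt (x y : ER) : Prop := ER_le x y /\ x <> y.

Definition ER_opp (x : ER) : ER :=
  match x with Fin a => Fin (- a) | PInf => NInf | NInf => PInf end.

(* Subtraction; the undefined forms oo - oo never arise in the lemma
   (the primed radii are finite there); they are given the junk value 0. *)
Definition ER_sub (x y : ER) : ER :=
  match x, y with
  | Fin a, Fin b => Fin (a - b)
  | PInf, PInf => Fin 0 | NInf, NInf => Fin 0
  | PInf, _ => PInf | NInf, _ => NInf
  | Fin _, PInf => NInf | Fin _, NInf => PInf
  end.

Definition ER_min (x y : ER) : ER :=
  match x, y with
  | NInf, _ | _, NInf => NInf
  | PInf, z | z, PInf => z
  | Fin a, Fin b => Fin (Rmin a b)
  end.

(* Product with the convention 0 * (+-oo) = 0. *)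
Definition ER_mul (x y : ER) : ER :=
  match x, y with
  | Fin a, Fin b => Fin (a * b)
  | Fin a, PInf | PInf, Fin a =>
      if Rlt_dec 0 a then PInf else if Rlt_dec a 0 then NInf else Fin 0
  | Fin a, NInf | NInf, Fin a =>
      if Rlt_dec 0 a then NInf else if Rlt_dec a 0 then PInf else Fin 0
  | PInf, PInf | NInf, NInf => PInf
  | PInf, NInf | NInf, PInf => NInf
  end.

(* a / b with a > 0 in all uses: a / 0 = +oo. *)
Definition ER_pdiv (a b : R) : ER :=
  if Req_EM_T b 0 then PInf else Fin (a / b).

Definition r_plus (q e w : R) : ER := ER_pdiv (q * (1 + e)) (1 + e * cos w).
Definition r_minus (q e w : R) : ER := ER_pdiv (q * (1 + e)) (1 - e * cos w).

Definition d_plus (q' e' q e w w' : R) : ER :=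
  ER_sub (r_plus q' e' w') (r_plus q e w).
Definition d_minus (q' e' q e w w' : R) : ER :=
  ER_sub (r_minus q' e' w') (r_minus q e w).

Definition delta_int (q' e' q e w w' : R) : ER :=
  ER_min (d_plus q' e' q e w w') (d_minus q' e' q e w w').
Definition delta_ext (q' e' q e w w' : R) : ER :=
  ER_min (ER_opp (d_plus q' e' q e w w')) (ER_opp (d_minus q' e' q e w w')).

Definition Qp (q' e' : R) : R := q' * (1 + e') / (1 - e').

Definition internal_nodes (q' e' q e w w' : R) : Prop :=
  ER_lt (Fin 0) (d_plus q' e' q e w w') /\ ER_lt (Fin 0) (d_minus q' e' q e w w').
Definition external_nodes (q' e' q e w w' : R) : Prop :=
  ER_lt (d_plus q' e' q e w w') (Fin 0) /\ ER_lt (d_minus q' e' q e w w') (Fin 0).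

Definition in_D1 (e w' : R) : Prop := 0 <= e <= 1 /\ 0 <= w' <= PI.
Definition in_D2 (qmax q w : R) : Prop := 0 < q <= qmax /\ 0 <= w <= PI / 2.

(* q' - 2q/(1 - cos w), an extended real (= -oo when w = 0) *)
Definition crit_int (q' q w : R) : ER := ER_sub (Fin q') (ER_pdiv (2 * q) (1 - cos w)).

(* Main.v *)
Require Import Defs.
From Stdlib Require Import Reals Lra Psatz.
Open Scope R_scope.

Lemma ER_min_le_l a b : ER_le (ER_min a b) a.
Proof. destruct a, b; simpl; auto; try apply Rmin_l; lra. Qed.
Lemma ER_min_le_r a b : ER_le (ER_min a b) b.
Proof. destruct a, b; simpl; auto; try apply Rmin_r; lra. Qed.
Lemma ER_le_trans a b c : ER_le a b -> ER_le b c -> ER_le a c.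
Proof. destruct a, b, c; simpl; auto; try lra; tauto. Qed.
Lemma ER_lt0_le a b : ER_lt (Fin 0) a -> ER_le a b -> ER_lt (Fin 0) b.
Proof.
  unfold ER_lt; destruct a, b; simpl; intros [H1 H2] H3; try tauto;
  split; try lra; try discriminate.
  intro E; inversion E; subst. apply H2; f_equal; lra.
Qed.
Lemma ER_min_pos a b : ER_lt (Fin 0) a -> ER_lt (Fin 0) b -> ER_lt (Fin 0) (ER_min a b).
Proof.
  unfold ER_lt; destruct a, b; simpl; intros [H1 H2] [H3 H4]; try tauto;
  split; auto.
  - apply Rmin_glb; auto.
  - intro E; inversion E. unfold Rmin in H0; destruct Rle_dec; subst; auto.
Qed.
Lemma ER_lt_opp a : ER_lt a (Fin 0) <-> ER_lt (Fin 0) (ER_opp a).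
Proof.
  unfold ER_lt; destruct a; simpl; split; intros [H1 H2]; split; try lra; try tauto;
  try discriminate.
  - intro E; inversion E. apply H2; f_equal; lra.
  - intro E; inversion E. apply H2; f_equal; lra.
Qed.
Lemma Fin_pos x : ER_lt (Fin 0) (Fin x) <-> 0 < x.
Proof.
  unfold ER_lt; simpl; split.
  - intros [H1 H2]. destruct H1; auto. subst; tauto.
  - intros H; split; [lra|]. intro E; inversion E; lra.
Qed.
Lemma pdiv_fin a b : b <> 0 -> ER_pdiv a b = Fin (a / b).
Proof. intros H; unfold ER_pdiv; destruct Req_EM_T; tauto. Qed.
Lemma pdiv_inf a b : b = 0 -> ER_pdiv a b = PInf.
Proof. intros H; unfold ER_pdiv; destruct Req_EM_T; tauto. Qed.

Lemma rpp q' e' k : 0 < q' -> 0 < e' < 1 -> -1 <= k <= 1 ->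
  exists x, ER_pdiv (q' * (1 + e')) (1 + e' * k) = Fin x /\ q' <= x <= Qp q' e'.
Proof.
  intros Hq He Hk. assert (Hb : 1 + e' * k > 0) by nra.
  exists (q' * (1 + e') / (1 + e' * k)). split. apply pdiv_fin; lra.
  set (x := q' * (1 + e') / (1 + e' * k)).
  assert (Hx : x * (1 + e' * k) = q' * (1 + e')) by (unfold x; field; lra). clearbody x.
  assert (HQ : Qp q' e' * (1 - e') = q' * (1 + e')) by (unfold Qp; field; lra).
  assert (0 <= Qp q' e') by (unfold Qp; apply Rmult_le_pos; [nra| apply Rlt_le, Rinv_0_lt_compat; lra]).
  assert (H1 : (x - q') * (1 + e' * k) >= 0).
  { rewrite Rmult_minus_distr_r, Hx. assert (q' * (1 + e' * k) <= q' * (1 + e')) by (apply Rmult_le_compat_l; nra). lra. }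
  assert (H2 : (Qp q' e' - x) * (1 + e' * k) >= 0).
  { rewrite Rmult_minus_distr_r, Hx, <- HQ. assert (Qp q' e' * (1 - e') <= Qp q' e' * (1 + e' * k)) by (apply Rmult_le_compat_l; nra). lra. }
  split.
  - destruct (Rle_dec q' x); auto. assert ((x - q') * (1 + e' * k) < 0) by (apply Rmult_neg_pos; lra). lra.
  - destruct (Rle_dec x (Qp q' e')); auto. assert ((Qp q' e' - x) * (1 + e' * k) < 0) by (apply Rmult_neg_pos; lra). lra.
Qed.

Lemma rmp q' e' k : 0 < q' -> 0 < e' < 1 -> -1 <= k <= 1 ->
  exists x, ER_pdiv (q' * (1 + e')) (1 - e' * k) = Fin x /\ q' <= x <= Qp q' e'.
Proof.
  intros Hq He Hk. replace (1 - e' * k) with (1 + e' * (-k)) by ring.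
  apply rpp; auto; lra.
Qed.

Lemma rp q e c : 0 < q -> 0 <= e <= 1 -> 0 <= c <= 1 ->
  exists y, ER_pdiv (q * (1 + e)) (1 + e * c) = Fin y /\ q <= y /\ y * (1 - c) <= 2 * q.
Proof.
  intros Hq He Hc. assert (Hb : 1 + e * c >= 1) by nra.
  exists (q * (1 + e) / (1 + e * c)). split. apply pdiv_fin; lra.
  set (y := q * (1 + e) / (1 + e * c)).
  assert (Hy : y * (1 + e * c) = q * (1 + e)) by (unfold y; field; lra). clearbody y.
  assert (0 <= y) by nra.
  split.
  - apply (Rmult_le_reg_r (1 + e * c)); [lra|]. rewrite Hy.
    apply Rmult_le_compat_l; nra.
  - assert (y * (1 - c) <= y) by nra.
    assert (y <= y * (1 + e * c)) by nra. nra.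
Qed.

Lemma rm q e c : 0 < q -> 0 <= e <= 1 -> 0 <= c <= 1 ->
  (1 - e * c = 0 /\ ER_pdiv (q * (1 + e)) (1 - e * c) = PInf) \/
  (exists y, 1 - e * c > 0 /\ ER_pdiv (q * (1 + e)) (1 - e * c) = Fin y /\ q <= y /\ y * (1 - c) <= 2 * q).
Proof.
  intros Hq He Hc. destruct (Req_EM_T (1 - e * c) 0) as [E|E].
  - left; split; auto. apply pdiv_inf; auto.
  - right. assert (Hb : 1 - e * c > 0) by nra.
    exists (q * (1 + e) / (1 - e * c)). split; auto. split. apply pdiv_fin; lra.
    set (y := q * (1 + e) / (1 - e * c)).
    assert (Hy : y * (1 - e * c) = q * (1 + e)) by (unfold y; field; lra). clearbody y.
    assert (0 <= y) by nra.
    split.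
    + apply (Rmult_le_reg_r (1 - e * c)); [lra|]. rewrite Hy.
      apply Rmult_le_compat_l; nra.
    + assert (y * (1 - c) <= y * (1 - e * c)) by (apply Rmult_le_compat_l; nra). nra.
Qed.

Lemma cos_w_bound w : 0 <= w <= PI / 2 -> 0 <= cos w <= 1.
Proof.
  intros Hw. pose proof PI_RGT_0. split.
  - apply cos_ge_0; lra.
  - apply COS_bound.
Qed.

Lemma Qp_ge q' e' : 0 < q' -> 0 < e' < 1 -> q' <= Qp q' e'.
Proof.
  intros Hq He. assert (HQ : Qp q' e' * (1 - e') = q' * (1 + e')) by (unfold Qp; field; lra).
  apply (Rmult_le_reg_r (1 - e')); [lra|]. rewrite HQ. apply Rmult_le_compat_l; lra.
Qed.

Lemma E_int q' e' q w : 0 < q' -> 0 < e' < 1 -> 0 < q -> 0 <= cos w <= 1 ->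
  delta_int q' e' q 1 w PI = crit_int q' q w.
Proof.
  intros Hq' He Hq Hc. unfold delta_int, d_plus, d_minus, r_plus, r_minus, crit_int.
  rewrite cos_PI. set (c := cos w) in *.
  pose proof (Qp_ge q' e' Hq' He).
  destruct (Rle_lt_or_eq_dec c 1 (proj2 Hc)) as [Hlt|Heq].
  - rewrite !pdiv_fin by lra. cbn [ER_sub ER_min]. f_equal.
    set (z1 := q * (1 + 1) / (1 + 1 * c)).
    assert (Hz1 : z1 * (1 + c) = 2 * q) by (unfold z1; field; lra). clearbody z1.
    replace (q * (1 + 1) / (1 - 1 * c)) with (2 * q / (1 - c)) by (field; lra).
    set (z2 := 2 * q / (1 - c)).
    assert (Hz2 : z2 * (1 - c) = 2 * q) by (unfold z2; field; lra). clearbody z2.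
    replace (q' * (1 + e') / (1 - e' * -1)) with q' by (field; lra).
    replace (q' * (1 + e') / (1 + e' * -1)) with (Qp q' e') by (unfold Qp; field; lra).
    assert (z1 <= z2).
    { apply (Rmult_le_reg_r (1 - c)); [lra|]. rewrite Hz2.
      assert (z1 * (1 - c) <= z1 * (1 + c)) by (apply Rmult_le_compat_l; nra). lra. }
    apply Rmin_right. lra.
  - do 3 rewrite pdiv_fin by lra. rewrite !pdiv_inf by lra. reflexivity.
Qed.

Lemma E_ext q' e' q w : 0 < q' -> 0 < e' < 1 -> 0 < q -> 0 <= cos w <= 1 ->
  delta_ext q' e' q 0 w PI = Fin (q - Qp q' e').
Proof.
  intros Hq' He Hq Hc. unfold delta_ext, d_plus, d_minus, r_plus, r_minus.
  rewrite cos_PI. set (c := cos w) in *.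
  pose proof (Qp_ge q' e' Hq' He).
  rewrite !pdiv_fin by lra. cbn [ER_sub ER_min ER_opp]. f_equal.
  replace (q' * (1 + e') / (1 - e' * -1)) with q' by (field; lra).
  replace (q' * (1 + e') / (1 + e' * -1)) with (Qp q' e') by (unfold Qp; field; lra).
  replace (q * (1 + 0) / (1 + 0 * c)) with q by (field; lra).
  replace (q * (1 + 0) / (1 - 0 * c)) with q by (field; lra).
  rewrite Rmin_left; lra.
Qed.

Lemma bounds q' e' q w e w' : 0 < q' -> 0 < e' < 1 -> 0 < q -> 0 <= cos w <= 1 ->
  in_D1 e w' ->
  ER_le (delta_int q' e' q 1 w PI) (delta_int q' e' q e w w') /\
  ER_le (delta_ext q' e' q 0 w PI) (delta_ext q' e' q e w w').
Proof.
  intros Hq' He Hq Hc [He1 Hw'].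
  rewrite E_int, E_ext by auto.
  pose proof (COS_bound w') as Hk.
  unfold delta_int, delta_ext, d_plus, d_minus, r_plus, r_minus, crit_int.
  set (c := cos w) in *.
  destruct (rpp q' e' (cos w') Hq' He Hk) as [x1 [Hx1 Bx1]].
  destruct (rmp q' e' (cos w') Hq' He Hk) as [x2 [Hx2 Bx2]].
  destruct (rp q e c Hq He1 Hc) as [y1 [Hy1 By1]].
  rewrite Hx1, Hx2, Hy1.
  destruct (rm q e c Hq He1 Hc) as [[E1 Hy2] | [y2 [Hpos [Hy2 By2]]]]; rewrite Hy2.
  - assert (Hc1 : c = 1) by nra.
    rewrite pdiv_inf by lra. cbn [ER_sub ER_min ER_opp ER_le]. split; [exact I|].
    lra.
  - cbn [ER_sub ER_min ER_opp ER_le]. split.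
    + destruct (Rle_lt_or_eq_dec c 1 (proj2 Hc)) as [Hlt|Heq].
      * rewrite pdiv_fin by lra. cbn [ER_sub ER_le].
        set (z := 2 * q / (1 - c)).
        assert (Hz : z * (1 - c) = 2 * q) by (unfold z; field; lra). clearbody z.
        assert (y1 <= z) by (apply (Rmult_le_reg_r (1 - c)); lra).
        assert (y2 <= z) by (apply (Rmult_le_reg_r (1 - c)); lra).
        apply Rmin_glb; lra.
      * rewrite pdiv_inf by lra. exact I.
    + apply Rmin_glb; lra.
Qed.

Theorem lemma3 (q' e' qmax : R) (Hq' : 0 < q') (He' : 0 < e' < 1) (Hqmax : 0 < qmax) :
  (forall q w, in_D2 qmax q w ->
     (forall e w', in_D1 e w' ->
        ER_le (delta_int q' e' q 1 w PI) (delta_int q' e' q e w w') /\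
        ER_le (delta_ext q' e' q 0 w PI) (delta_ext q' e' q e w w')) /\
     delta_int q' e' q 1 w PI = crit_int q' q w /\
     delta_ext q' e' q 0 w PI = Fin (q - Qp q' e') /\
     ((forall e w', in_D1 e w' -> internal_nodes q' e' q e w w') <->
        ER_lt (Fin 0) (crit_int q' q w)) /\
     ((forall e w', in_D1 e w' -> external_nodes q' e' q e w w') <->
        0 < q - Qp q' e')) /\
  (forall q w, in_D2 qmax q w ->
     ER_le (crit_int q' q w) (Fin 0) -> q - Qp q' e' <= 0 ->
     exists e w', in_D1 e w' /\
       ER_mul (d_plus q' e' q e w w') (d_minus q' e' q e w w') = Fin 0).
Proof.
  pose proof PI_RGT_0 as HPI.
  assert (HD1 : in_D1 1 PI) by (split; lra).
  assert (HD0 : in_D1 0 PI) by (split; lra).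
  split.
  - intros q w [[Hq _] Hw]. pose proof (cos_w_bound w Hw) as Hc.
    pose proof (E_int q' e' q w Hq' He' Hq Hc) as EI.
    pose proof (E_ext q' e' q w Hq' He' Hq Hc) as EE.
    split; [intros; apply bounds; auto|].
    split; [exact EI|]. split; [exact EE|]. split.
    + split.
      * intros H. destruct (H 1 PI HD1) as [Hp Hm]. rewrite <- EI.
        unfold delta_int. apply ER_min_pos; auto.
      * intros Hcr e w' HD. destruct (bounds q' e' q w e w' Hq' He' Hq Hc HD) as [Hle _].
        rewrite EI in Hle. split.
        -- eapply ER_lt0_le; [exact Hcr|]. eapply ER_le_trans; [exact Hle|]. apply ER_min_le_l.
        -- eapply ER_lt0_le; [exact Hcr|]. eapply ER_le_trans; [exact Hle|]. apply ER_min_le_r.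
    + split.
      * intros H. destruct (H 0 PI HD0) as [Hp Hm]. apply Fin_pos. rewrite <- EE.
        unfold delta_ext. apply ER_min_pos; apply ER_lt_opp; auto.
      * intros Hcr e w' HD. destruct (bounds q' e' q w e w' Hq' He' Hq Hc HD) as [_ Hle].
        rewrite EE in Hle. apply Fin_pos in Hcr. split; apply ER_lt_opp.
        -- eapply ER_lt0_le; [exact Hcr|]. eapply ER_le_trans; [exact Hle|]. apply ER_min_le_l.
        -- eapply ER_lt0_le; [exact Hcr|]. eapply ER_le_trans; [exact Hle|]. apply ER_min_le_r.
  - intros q w [[Hq _] Hw] Hcr HqQ. pose proof (cos_w_bound w Hw) as Hc.
    pose proof (Qp_ge q' e' Hq' He') as HQ'.
    set (c := cos w) in *.
    assert (Hq'c : q' * (1 - c) <= 2 * q).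
    { destruct (Rle_lt_or_eq_dec c 1 (proj2 Hc)) as [Hlt|Heq].
      - unfold crit_int in Hcr. fold c in Hcr. rewrite pdiv_fin in Hcr by lra.
        cbn [ER_sub ER_le] in Hcr.
        set (z := 2 * q / (1 - c)) in *.
        assert (Hz : z * (1 - c) = 2 * q) by (unfold z; field; lra). clearbody z.
        assert (q' * (1 - c) <= z * (1 - c)) by (apply Rmult_le_compat_r; lra). lra.
      - rewrite Heq. lra. }
    set (v := Rmax q q').
    assert (Hv1 : q <= v) by apply Rmax_l.
    assert (Hv2 : q' <= v) by apply Rmax_r.
    assert (Hv3 : v <= Qp q' e') by (apply Rmax_lub; lra).
    assert (Hv4 : v * (1 - c) <= 2 * q).
    { unfold v, Rmax; destruct Rle_dec; auto. nra. }
    clearbody v.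
    set (t := q' * (1 + e') / v).
    assert (Ht : t * v = q' * (1 + e')) by (unfold t; field; lra). clearbody t.
    assert (HQd : Qp q' e' * (1 - e') = q' * (1 + e')) by (unfold Qp; field; lra).
    assert (Ht1 : t <= 1 + e').
    { apply (Rmult_le_reg_r v); [lra|]. rewrite Ht. rewrite (Rmult_comm (1 + e') v).
      apply Rmult_le_compat_r; lra. }
    assert (Ht2 : 1 - e' <= t).
    { apply (Rmult_le_reg_r v); [lra|]. rewrite Ht, <- HQd. rewrite (Rmult_comm (1 - e') v).
      apply Rmult_le_compat_r; lra. }
    set (k := (1 - t) / e').
    assert (Hk : e' * k = 1 - t) by (unfold k; field; lra). clearbody k.
    assert (Hkb : -1 <= k <= 1) by nra.
    set (E := (v - q) / (q + v * c)).
    assert (Hden : q + v * c > 0) by nra.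
    assert (HE : E * (q + v * c) = v - q) by (unfold E; field; lra). clearbody E.
    assert (HE0 : 0 <= E) by nra.
    assert (HE1 : E <= 1) by nra.
    exists E, (acos k). split.
    + split; [lra| apply acos_bound].
    + unfold d_plus, d_minus, r_plus, r_minus. rewrite cos_acos by auto.
      fold c.
      destruct (rpp q' e' k Hq' He' Hkb) as [x1 [Hx1 _]].
      destruct (rp q E c Hq (conj HE0 HE1) Hc) as [y1 [Hy1 _]].
      rewrite Hx1, Hy1.
      assert (Hec : 1 - E * c > 0) by nra.
      rewrite !pdiv_fin by lra.
      replace (1 - e' * k) with t by lra.
      replace (q' * (1 + e') / t) with v by (rewrite <- Ht; field; lra).
      replace (q * (1 + E) / (1 - E * c)) with v.
      * cbn [ER_sub ER_mul]. f_equal. ring.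
      * assert (q * (1 + E) = v * (1 - E * c)) by nra.
        rewrite H. field. lra.
Qed.
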